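(* Let $K$ be a field of characteristic $0$ with henselian valuation ring $A$, valuation $v$ and residue field of characteristic $p>0$, containing a primitive $p$-th root of unity $\zeta$; put $\mathfrak{z}=\zeta-1$. Let $L|K$ be a non-trivial defectless Kummer extension of degree $p$ and $h$ a best element. Then the ideal $\mathbb{I}'$ of $A$ generated by $\{p\frac{a-1}{h-1}: a\in A,\ a^ph \text{ is best}\}$ is contained in $\mathbb{I}=\{x\in K: v(x)\ge\frac{p-1}{p}v(\frac{\mathfrak{z}^p}{h-1})\}$.
   Context: $\mathfrak{A}$ is the set of $g\in K$ such that the solutions of $X^p=g$ generate $L$; $g\in\mathfrak{A}$ is best if $v(\mathfrak{z}^p/(g-1))=\inf_{g'\in\mathfrak{A}}v(\mathfrak{z}^p/(g'-1))$. Defectless means $p=ef$ with $e$ the ramification index and $f$ the residue degree of $L|K$. *)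

(* Defs.v *)
From HB Require Import structures.
From mathcomp Require Import all_boot all_order all_algebra all_field.
Set Implicit Arguments. Unset Strict Implicit. Unset Printing Implicit Defensive.
Import Order.TTheory GRing.Theory Num.Theory.
Local Open Scope ring_scope.

(* Valuations are represented (up to equivalence) by their valuation rings. *)
Definition is_valuation_ring (F : fieldType) (A : {pred F}) : Prop :=
  [/\ 1 \in A,
      (forall x y, x \in A -> y \in A -> x - y \in A),
      (forall x y, x \in A -> y \in A -> x * y \in A) &
      (forall x, x != 0 -> x \in A \/ x^-1 \in A)].

Definition in_max (F : fieldType) (A : {pred F}) (x : F) : Prop :=
  x \in A /\ (x != 0 -> x^-1 \notin A).

Definition is_unitA (F : fieldType) (A : {pred F}) (x : F) : Prop :=
  [/\ x \in A, x != 0 & x^-1 \in A].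

(* v(x) <= v(y) for the valuation v attached to A *)
Definition vle (F : fieldType) (A : {pred F}) (x y : F) : Prop :=
  y = 0 \/ (x != 0 /\ y / x \in A).

Definition henselian (F : fieldType) (A : {pred F}) : Prop :=
  forall f : {poly F}, f \is monic -> (forall i, f`_i \in A) ->
  forall a, a \in A -> in_max A f.[a] -> ~ in_max A (f^`()).[a] ->
  exists b, [/\ b \in A, root f b & in_max A (b - a)].

Definition kummer_gen (K : fieldType) (L : fieldExtType K) (p : nat) (g : K) : Prop :=
  exists alpha : L, alpha ^+ p = g%:A /\ (<<1; alpha>>%VS = fullv).

Definition best (K : fieldType) (L : fieldExtType K) (A : {pred K})
    (p : nat) (zeta g : K) : Prop :=
  kummer_gen L p g /\
  forall g', kummer_gen L p g' ->
    vle A ((zeta - 1) ^+ p / (g - 1)) ((zeta - 1) ^+ p / (g' - 1)).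

(* e is the ramification index (Gamma_L : Gamma_K), where B is the valuation
   ring of L extending A: u_0..u_{e-1} represent exactly the cosets. *)
Definition ram_index (K : fieldType) (L : fieldExtType K) (A : {pred K})
    (B : {pred L}) (e : nat) : Prop :=
  exists u : 'I_e -> L,
  [/\ (forall i, u i != 0),
      (forall y : L, y != 0 ->
         exists i, exists c : K, c != 0 /\ is_unitA B (y / (c%:A * u i))) &
      (forall i j (c : K), c != 0 -> is_unitA B (u i / (c%:A * u j)) -> i = j)].

(* f is the residue degree: b_0..b_{f-1} in B whose residues form a basis of
   the residue field of B over the residue field of A. *)
Definition res_degree (K : fieldType) (L : fieldExtType K) (A : {pred K})
    (B : {pred L}) (f : nat) : Prop :=
  exists b : 'I_f -> L,
  [/\ (forall i, b i \in B),
      (forall c : 'I_f -> K, (forall i, c i \in A) ->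
         in_max B (\sum_i (c i)%:A * b i) -> forall i, in_max A (c i)) &
      (forall y, y \in B -> exists c : 'I_f -> K,
         (forall i, c i \in A) /\ in_max B (y - \sum_i (c i)%:A * b i))].

Definition defectless (K : fieldType) (L : fieldExtType K) (A : {pred K})
    (B : {pred L}) (p : nat) : Prop :=
  exists e f : nat, [/\ (e * f)%N = p, ram_index A B e & res_degree A B f].

Definition in_Iprime (K : fieldType) (L : fieldExtType K) (A : {pred K})
    (p : nat) (zeta h x : K) : Prop :=
  exists n (c a : 'I_n -> K),
  [/\ (forall i, c i \in A), (forall i, a i \in A),
      (forall i, best L A p zeta (a i ^+ p * h)) &
      x = \sum_i c i * (p%:R * (a i - 1) / (h - 1))].

(* x in I  <=>  v(x) >= (p-1)/p v(z^p/(h-1))  <=>  p v(x) >= (p-1) v(z^p/(h-1)) *)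
Definition in_I (K : fieldType) (A : {pred K}) (p : nat) (zeta h x : K) : Prop :=
  vle A (((zeta - 1) ^+ p / (h - 1)) ^+ p.-1) (x ^+ p).

(* Main.v *)
Require Import Defs.
From HB Require Import structures.
From mathcomp Require Import all_boot all_order all_algebra all_field.
From mathcomp Require Import ring.
Import Order.TTheory GRing.Theory Num.Theory.
Local Open Scope ring_scope.
Set Implicit Arguments. Unset Strict Implicit.


Section Val.
Variables (F : fieldType) (A : {pred F}).
Hypothesis hA : is_valuation_ring A.

Lemma A1 : 1 \in A. Proof. by case: hA. Qed.
Lemma AB x y : x \in A -> y \in A -> x - y \in A. Proof. by case: hA => _ H _ _; apply: H. Qed.
Lemma AM x y : x \in A -> y \in A -> x * y \in A. Proof. by case: hA => _ _ H _; apply: H. Qed.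
Lemma A0 : 0 \in A. Proof. by rewrite -(subrr 1) AB ?A1. Qed.
Lemma AN x : x \in A -> - x \in A. Proof. by move=> h; rewrite -sub0r AB ?A0. Qed.
Lemma AD x y : x \in A -> y \in A -> x + y \in A.
Proof. by move=> hx hy; rewrite -(opprK y) AB ?AN. Qed.
Lemma AX x n : x \in A -> x ^+ n \in A.
Proof. by move=> hx; elim: n => [|n IH]; rewrite ?expr0 ?A1 // exprS AM. Qed.
Lemma An n : n%:R \in A.
Proof. by elim: n => [|n IH]; rewrite ?A0 // -addn1 natrD AD ?A1. Qed.
Lemma Amn x n : x \in A -> x *+ n \in A.
Proof. by move=> hx; rewrite -mulr_natr AM ?An. Qed.
Lemma Asum (I : Type) (r : seq I) (P : pred I) (f : I -> F) :
  (forall i, P i -> f i \in A) -> \sum_(i <- r | P i) f i \in A.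
Proof. by move=> H; apply: (big_ind (fun x => x \in A)) => //; [exact: A0|exact: AD]. Qed.
Lemma Ainv x : x != 0 -> x \in A \/ x^-1 \in A. Proof. by case: hA => _ _ _ H; apply: H. Qed.

Local Notation vle := (vle A).
Definition vlt x y := ~ vle y x.

Lemma vle_refl x : vle x x.
Proof. rewrite /vle; case: (eqVneq x 0) => [->|h]; [by left|right]. by rewrite divff ?A1. Qed.
Lemma vler0 x : vle x 0. Proof. by left. Qed.
Lemma vle0r y : vle 0 y -> y = 0. Proof. by case => // -[]; rewrite eqxx. Qed.
Lemma vle_trans y x z : vle x y -> vle y z -> vle x z.
Proof.
case=> [->|[hx hxy]] h2; first by rewrite (vle0r h2); left.
case: h2 => [->|[hy hyz]]; [by left|right; split=> //].
have -> : z / x = (z / y) * (y / x) by rewrite mulrA divfK.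
exact: AM.
Qed.

Lemma vleE x y : x != 0 -> vle x y <-> y / x \in A.
Proof.
move=> hx; split; first by case=> [->|[]//]; rewrite mul0r A0.
by move=> h; right.
Qed.

Lemma vle_total x y : vle x y \/ vle y x.
Proof.
case: (eqVneq x 0) => [->|hx]; first by right; left.
case: (eqVneq y 0) => [->|hy]; first by left; left.
have : y / x != 0 by rewrite mulf_neq0 ?invr_eq0.
case/Ainv => h; [left|right]; right; split => //.
by rewrite invf_div in h.
Qed.

Lemma vle_mulA x c : c \in A -> vle x (x * c).
Proof.
move=> hc; case: (eqVneq x 0) => [->|hx]; first by rewrite mul0r; left.
by right; split => //; rewrite mulrC mulrA mulVf // mul1r.
Qed.

Lemma vle_mul x y u w : vle x y -> vle u w -> vle (x * u) (y * w).
Proof.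
case=> [->|[hx hxy]]; first by rewrite mul0r; left.
case=> [->|[hu huw]]; first by rewrite mulr0; left.
right; split; first by rewrite mulf_neq0.
have -> : y * w / (x * u) = (y / x) * (w / u) by rewrite invfM mulrACA.
exact: AM.
Qed.

Lemma vle_mul2r x y c : c != 0 -> vle (x * c) (y * c) -> vle x y.
Proof.
move=> hc; case=> [/eqP|[hx hxy]]; first by rewrite mulf_eq0 (negPf hc) orbF => /eqP ->; left.
right; split; first by apply: contraNneq hx => ->; rewrite mul0r.
by move: hxy; rewrite invfM mulrACA divff // mulr1.
Qed.

Lemma vleNr x y : vle x (- y) <-> vle x y.
Proof.
suff H : forall y, vle x y -> vle x (- y) by split; [move/H; rewrite opprK|exact: H].
move=> {}y; case=> [->|[hx h]]; first by rewrite oppr0; left.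
by right; split => //; rewrite mulNr AN.
Qed.

Lemma vleNl x y : vle (- x) y <-> vle x y.
Proof.
suff H : forall x, vle x y -> vle (- x) y by split; [move/H; rewrite opprK|exact: H].
move=> {}x; case=> [->|[hx h]]; first by left.
by right; split; rewrite ?oppr_eq0 // invrN mulrN AN.
Qed.

Lemma vle_add x y z : vle x y -> vle x z -> vle x (y + z).
Proof.
case: (eqVneq x 0) => [-> /vle0r -> /vle0r ->|hx]; first by rewrite addr0; left.
move=> /(vleE _ hx) h1 /(vleE _ hx) h2; apply/(vleE _ hx).
by rewrite mulrDl; apply: AD.
Qed.

Lemma vle_sub x y z : vle x y -> vle x z -> vle x (y - z).
Proof. by move=> h1 h2; apply: vle_add => //; apply/vleNr. Qed.

Lemma vle_sum (I : Type) (r : seq I) (P : pred I) (f : I -> F) x :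
  (forall i, P i -> vle x (f i)) -> vle x (\sum_(i <- r | P i) f i).
Proof. by move=> H; apply: (big_ind (vle x)) => //; [exact: vler0|exact: vle_add]. Qed.

Lemma vle_prod (I : Type) (r : seq I) (P : pred I) (f g : I -> F) :
  (forall i, P i -> vle (f i) (g i)) ->
  vle (\prod_(i <- r | P i) f i) (\prod_(i <- r | P i) g i).
Proof. by move=> H; apply: (big_ind2 vle) => //; [exact: vle_refl|exact: vle_mul]. Qed.

Lemma vle_exp x y n : vle x y -> vle (x ^+ n) (y ^+ n).
Proof.
move=> h; elim: n => [|n IH]; first by rewrite !expr0; apply: vle_refl.
by rewrite !exprS; apply: vle_mul.
Qed.

Lemma vle1 c : vle 1 c <-> c \in A.
Proof.
split; first by move/(vleE _ (oner_neq0 F)); rewrite divr1.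
by move=> h; right; rewrite oner_neq0 divr1.
Qed.

Lemma vlt_le x y : vlt x y -> vle x y.
Proof. by rewrite /vlt; case: (vle_total x y). Qed.

Lemma vle_lt_trans y x z : vle x y -> vlt y z -> vlt x z.
Proof. by move=> h1 h2 h3; apply: h2; apply: vle_trans h3 h1. Qed.

Lemma vlt_le_trans y x z : vlt x y -> vle y z -> vlt x z.
Proof. by move=> h1 h2 h3; apply: h1; apply: vle_trans h2 h3. Qed.

Lemma vlt_mul2r x y c : c != 0 -> vlt x y -> vlt (x * c) (y * c).
Proof. by move=> hc h1 h2; apply: h1; apply: vle_mul2r h2. Qed.

Lemma A_root t n : (0 < n)%N -> t ^+ n \in A -> t \in A.
Proof.
move=> n0 htn; case: (eqVneq t 0) => [->|ht]; first exact: A0.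
case: (Ainv ht) => // hi.
have -> : t = t ^+ n * t^-1 ^+ n.-1.
  by rewrite -(prednK n0) exprS -mulrA exprVn mulfV ?mulr1 // expf_neq0.
by rewrite AM // AX.
Qed.

Lemma vle_exp_inv x y n : (0 < n)%N -> vle (x ^+ n) (y ^+ n) -> vle x y.
Proof.
move=> n0; case: (eqVneq x 0) => [->|hx].
  by rewrite expr0n eqn0Ngt n0 /= => /vle0r /eqP; rewrite expf_eq0 n0 /= => /eqP ->; left.
move=> /(vleE _ (expf_neq0 _ hx)); rewrite -expr_div_n => /(A_root n0) h.
by right.
Qed.

Lemma vlt_exp x y n : (0 < n)%N -> vlt x y -> vlt (x ^+ n) (y ^+ n).
Proof. by move=> n0 h1 h2; apply: h1; apply: vle_exp_inv h2. Qed.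

Lemma vlt_add x y : vlt x y -> vle (x + y) x.
Proof.
move=> h; case: (vle_total (x + y) y) => h2.
  have := vle_sub h2 (vle_refl (x + y)).
  by rewrite opprD addrCA subrr addr0 => /vleNr.
by have := vle_sub h2 (vle_refl y); rewrite addrK => /h.
Qed.

End Val.

Lemma vle_dec (F : fieldType) (A : {pred F}) (x y : F) : vle A x y \/ ~ vle A x y.
Proof.
case: (eqVneq y 0) => [->|hy]; first by left; left.
case: (eqVneq x 0) => [->|hx].
  by right; case => [/eqP|[]]; rewrite ?eqxx ?(negPf hy).
case: (boolP (y / x \in A)) => h; first by left; right.
by right; case => [/eqP|[_ h2]]; [rewrite (negPf hy)|rewrite h2 in h].
Qed.


Lemma prodP (F : fieldType) (p : nat) (zeta : F) : prime p -> p.-primitive_root zeta ->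
  \prod_(1 <= i < p) (1 - zeta ^+ i) = p%:R.
Proof.
move=> hp hz.
have H := factor_Xn_sub_1 hz.
rewrite big_ltn ?prime_gt0 // expr0 subrX1 polyC1 in H.
have X1 : ('X - 1 : {poly F}) != 0 by rewrite -polyC1 polyXsubC_eq0.
have {}H := mulfI X1 H.
have := congr1 (fun q => q.[1]) H => /=.
rewrite horner_prod horner_sum.
rewrite [X in _ = X -> _](eq_bigr (fun _ => 1)); last by move=> i _; rewrite horner_exp hornerX expr1n.

rewrite sumr_const card_ord => <-.
by apply: eq_bigr => i _; rewrite hornerXsubC.
Qed.

Section Zeta.
Variables (F : fieldType) (A : {pred F}).
Hypothesis hA : is_valuation_ring A.
Variables (p : nat) (zeta : F).
Hypotheses (hp : prime p) (hz : p.-primitive_root zeta).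
Local Notation z := (zeta - 1).

Lemma zetaA : zeta \in A.
Proof. by apply: (A_root hA (prime_gt0 hp)); rewrite prim_expr_order // A1. Qed.

Lemma z_neq0 : z != 0.
Proof.
rewrite subr_eq0; apply/negP => /eqP h.
have := prim_order_dvd hz 1; rewrite expr1 h eqxx dvdn1 => /eqP h1.
by have := prime_gt1 hp; rewrite h1.
Qed.

Lemma zA : z \in A.
Proof. by rewrite AB ?zetaA ?A1. Qed.

Lemma vle_z_factor i : (0 < i < p)%N -> vle A z (1 - zeta ^+ i) /\ vle A (1 - zeta ^+ i) z.
Proof.
move=> /andP [i0 ip].
have hzi : p.-primitive_root (zeta ^+ i).
  rewrite prim_root_exp_coprime // coprime_sym prime_coprime //.
  by apply/negP => /(dvdn_leq i0); rewrite leqNgt ip.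
split.
  apply/(vleNr hA); rewrite opprB subrX1. apply: vle_mulA.
  by apply: (Asum hA) => j _; apply: (AX hA); apply: zetaA.
have [j hj] := prim_rootP hzi (prim_expr_order hz).
apply/(vleNl hA); rewrite opprB.
rewrite [X in vle A _ (X - 1)]hj [X in vle A _ X]subrX1; apply: vle_mulA.
by apply: (Asum hA) => k _; apply: (AX hA); apply: (AX hA); apply: zetaA.
Qed.

Lemma vle_zp : vle A (z ^+ p.-1) p%:R /\ vle A p%:R (z ^+ p.-1).
Proof.
have E : z ^+ p.-1 = \prod_(1 <= i < p) z.
  by rewrite prodr_const_nat subn1.
rewrite E -(prodP hp hz) !big_nat; split; apply: (vle_prod hA) => i /andP [h1 h2];
  by have [] := vle_z_factor (i:=i); rewrite ?h1 ?h2.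
Qed.

End Zeta.


Lemma kummer_not_pow (K : fieldType) (L : fieldExtType K) (p : nat) (zeta c : K) :
  prime p -> p.-primitive_root zeta -> \dim {:L} = p -> ~ kummer_gen L p (c ^+ p).
Proof.
move=> hp hz hdim [al [hal hfull]].
suff : al \in (1%AS : {subfield L}).
  move/Fadjoin_idP; rewrite hfull => h1.
  by have := prime_gt1 hp; rewrite -hdim h1 dimv1.
have hin : forall k : K, k%:A \in (1%AS : {subfield L}).
  by move=> k; rewrite -[k%:A]/(k *: 1) memvZ // memv_line.
case: (eqVneq c 0) => [c0|c0].
  move: hal; rewrite c0 expr0n gtn_eqF ?prime_gt0 // scale0r => /eqP.
  by rewrite expf_eq0 => /andP [_ /eqP ->]; rewrite mem0v.
have hzL : p.-primitive_root (zeta%:A : L) by rewrite (fmorph_primitive_root (in_alg L)).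
have cA0 : (c%:A : L) != 0 by rewrite scaler_eq0 oner_eq0 orbF.
have : (al / c%:A) ^+ p = 1.
  by rewrite expr_div_n hal -[(c%:A)^+p](rmorphXn (in_alg L)) /= divff // scaler_eq0 oner_eq0 orbF expf_neq0.
case/(prim_rootP hzL) => i hi.
have -> : al = in_alg L (c * zeta ^+ i).
  by rewrite rmorphM rmorphXn /= -hi mulrC divfK.
exact: hin.
Qed.

Lemma hensel_bound (K : fieldType) (L : fieldExtType K) (A : {pred K}) (p : nat) (zeta h : K) :
  is_valuation_ring A -> henselian A -> prime p -> p.-primitive_root zeta ->
  \dim {:L} = p -> kummer_gen L p h -> vle A (h - 1) ((zeta - 1) ^+ p).
Proof.
move=> hA hH hp hz hdim hk.
case: (vle_dec A (h - 1) ((zeta - 1) ^+ p)) => // hlt; exfalso.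
set z := zeta - 1.
have z0 : z != 0 := z_neq0 hp hz.
have zA : z \in A := zA hA hp hz.
set w := z ^+ p.
have w0 : w != 0 by rewrite expf_neq0.
have [hzp1 hzp2] := vle_zp hA hp hz.
have p0 : p%:R != 0 :> K.
  apply/negP => /eqP e; move: hzp2; rewrite e => /vle0r /eqP; rewrite expf_eq0.
  by rewrite (negPf z0) andbF.
have hwh : vle A w (h - 1) by apply: (vlt_le hA).
have hpz : p%:R / z ^+ p.-1 \in A.
  by case: hzp1 => [/eqP|[_ //]]; rewrite (negPf p0).
have ep : z ^+ p = z ^+ p.-1 * z by rewrite -exprSr prednK // prime_gt0.
have hE : (1 - h) / w \in A.
  by case: hwh => [e|[_ h1]]; [rewrite -[1 - h]opprB e oppr0 mul0r A0 | rewrite -[1 - h]opprB mulNr (AN hA)].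
pose E := fun i : nat => (if i == 0%N then (1 - h) / w else 'C(p, i)%:R * z ^+ i / w : K).
pose f := \poly_(i < p.+1) E i.
have fmon : f \is monic.
  have Ep : E p = 1 by rewrite /E gtn_eqF ?prime_gt0 // binn mulr1n mul1r divff.
  by rewrite monicE lead_coef_poly //= Ep ?oner_neq0.
have fA : forall i, f`_i \in A.
  move=> i; rewrite coef_poly; case: ifP => hi; last exact: (A0 hA).
  rewrite /E; case: eqP => [_|/eqP i0]; first exact: hE.
  have [ip|ip] := eqVneq i p.
    by rewrite ip binn mulr1n mul1r divff // A1.
  have ilt : (0 < i < p)%N by rewrite lt0n i0 ltn_neqAle ip -ltnS hi.
  have := prime_dvd_bin hp ilt => /dvdnP [m hm].
  have -> : 'C(p, i)%:R * z ^+ i / w = m%:R * z ^+ i.-1 * (p%:R / z ^+ p.-1).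
    have ei : z ^+ i = z ^+ i.-1 * z by rewrite -exprSr prednK // lt0n.
    rewrite hm natrM /w ep ei; field; rewrite ?expf_neq0 //.
  apply: (AM hA) => //; apply: (AM hA); [exact: An | exact: AX].
have f0 : in_max A f.[0].
  rewrite horner_coef0 coef_poly /= /E /=; split.
    exact: hE.
  move=> hne; apply/negP => hin; apply: hlt.
  have ew : w / (h - 1) = - ((1 - h) / w)^-1.
    by rewrite invf_div -[h - 1]opprB invrN mulrN.
  right; split; last by rewrite ew (AN hA).
  by apply: contraNneq hne => e; rewrite -[1 - h]opprB e oppr0 mul0r.
have f1 : ~ in_max A (f^`()).[0].
  have hp1 : (1 < p.+1)%N by rewrite ltnS prime_gt0.
  rewrite horner_coef0 coef_deriv coef_poly hp1 /= /E /= bin1 mulr1n.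
  have hx : p%:R * z ^+ 1 / w = p%:R / z ^+ p.-1.
    rewrite /w ep expr1; field; rewrite ?expf_neq0 //.
  have h2 : z ^+ p.-1 / p%:R \in A.
    by case: hzp2 => [/eqP|[_ //]]; rewrite expf_eq0 (negPf z0) andbF.
  rewrite hx => -[_ H].
  have := H (mulf_neq0 p0 (invr_neq0 (expf_neq0 _ z0))).
  by rewrite invf_div h2.
have [b [bA rb _]] := hH f fmon fA 0 (A0 hA) f0 f1.
apply: (kummer_not_pow (c := 1 + z * b) hp hz hdim).
suff -> : (1 + z * b) ^+ p = h by [].
apply/eqP; rewrite -subr_eq0; move/eqP: rb; rewrite horner_poly => rb.
have -> : (1 + z * b) ^+ p - h = w * \sum_(i < p.+1) E i * b ^+ i.
  rewrite exprDn !big_ord_recl /= mulrDr.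
  have E0 : E 0%N = (1 - h) / w by [].
  rewrite expr1n mul1r !expr0 bin0 mulr1n E0 !mulr1 [w * _]mulrC divfK //.
  rewrite addrAC; congr (_ + _).
  rewrite mulr_sumr; apply: eq_bigr => i _.
  have Ei : E (bump 0 i) = 'C(p, i.+1)%:R * z ^+ i.+1 / w by [].
  rewrite Ei /bump /= add1n expr1n mul1r exprMn -mulr_natl.
  field; exact: w0.
by rewrite rb mulr0.
Qed.


Lemma vle_div_inv (F : fieldType) (A : {pred F}) (c x y : F) :
  c != 0 -> x != 0 -> vle A (c / y) (c / x) -> y != 0 /\ vle A x y.
Proof.
move=> c0 x0; case=> [/eqP|[h1 h2]].
  by rewrite mulf_eq0 (negPf c0) invr_eq0 (negPf x0).
have y0 : y != 0 by apply: contraNneq h1 => ->; rewrite invr0 mulr0.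
split => //; right; split => //.
have e : c / x / (c / y) = y / x by field; rewrite c0 x0 y0.
by rewrite -e.
Qed.

Lemma exp_split (F : fieldType) (x : F) n : (0 < n)%N -> x ^+ n = x ^+ n.-1 * x.
Proof. by move=> n0; rewrite -exprSr prednK. Qed.

Lemma binom_mid (F : fieldType) (A : {pred F}) (p : nat) (a : F) :
  is_valuation_ring A -> prime p -> a \in A ->
  vle A (p%:R * (a - 1)) (a ^+ p - 1 - (a - 1) ^+ p).
Proof.
move=> hA hp aA.
have [p' ep] : exists p', p = p'.+1 by exists p.-1; rewrite prednK ?prime_gt0.
subst p.
set e := a - 1.
have eA : e \in A by rewrite AB ?A1.
have -> : a = e + 1 by rewrite /e subrK.
rewrite exprDn big_ord_recl big_ord_recr /= subn0 expr0 mulr1 bin0 mulr1n.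
rewrite subnn expr0 expr1n mul1r binn mulr1n.
set S := \sum_(i < p') _.
have -> : e ^+ p'.+1 + (S + 1) - 1 - e ^+ p'.+1 = S.
  by ring.
apply: (vle_sum hA) => i _.
rewrite expr1n mulr1 /bump /= add1n.
have ilt : (0 < i.+1 < p'.+1)%N by rewrite ltnS; exact: ltn_ord.
have := prime_dvd_bin hp ilt => /dvdnP [m hm].
rewrite hm.
have hpi : (p'.+1 - i.+1 = (p' - i.+1).+1)%N by rewrite subSS subnSK.
have hX : forall X : F, X *+ (m * p'.+1) = X * m%:R * p'.+1%:R by move=> X; rewrite -mulrA -natrM mulr_natr.
rewrite hpi exprS hX.
have -> : e * e ^+ (p' - i.+1) * m%:R * p'.+1%:R = p'.+1%:R * e * (m%:R * e ^+ (p' - i.+1)).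
  by ring.
by apply: vle_mulA; rewrite AM ?An ?AX.
Qed.

Lemma gen_case (K : fieldType) (L : fieldExtType K) (A : {pred K}) (p : nat) (zeta h a : K) :
  is_valuation_ring A -> prime p -> p.-primitive_root zeta ->
  vle A (h - 1) ((zeta - 1) ^+ p) -> kummer_gen L p h ->
  a \in A -> best L A p zeta (a ^+ p * h) ->
  vle A (h - 1) ((a - 1) ^+ p).
Proof.
move=> hA hp hz hb hkh aA [_ hbest].
set z := zeta - 1; set w := h - 1; set e := a - 1; set E := e ^+ p.
have z0 : z != 0 := z_neq0 hp hz.
have zp0 : z ^+ p != 0 by rewrite expf_neq0.
have w0 : w != 0.
  by apply/eqP => e0; move: hb; rewrite -/w e0 => /vle0r /eqP; rewrite (negPf zp0).
have p0 : (0 < p)%N := prime_gt0 hp.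
have [hzp1 hzp2] := vle_zp hA hp hz.
case: (vle_dec A w E) => // hlt; exfalso.
case: (vle_dec A z e) => hze.
  by apply: hlt; apply: (vle_trans hA) hb _; apply: (vle_exp hA).
have e0 : e != 0 by apply/eqP => e0; apply: hze; rewrite e0; left.
have eA : e \in A by rewrite AB ?A1.
have EA : E \in A by rewrite AX.
have hEPe : vlt A E (p%:R * e).
  rewrite /E (exp_split _ p0); apply: vlt_mul2r => //.
  apply: (vlt_le_trans hA) hzp1.
  by apply: (vlt_exp hA); rewrite ?ltn_predRL ?prime_gt1.
set T := a ^+ p - 1 - E.
have hET : vlt A E T := vlt_le_trans hA hEPe (binom_mid hA hp aA).
have hap : vle A (a ^+ p - 1) E.
  have -> : a ^+ p - 1 = E + T by rewrite /T; ring.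
  exact: (vlt_add hA hET).
have w1 : vlt A 1 w.
  apply: (vle_lt_trans hA) (hlt); exact/(vle1 hA).
have hh1 : vle A h 1.
  by have := vlt_add hA w1; rewrite /w addrC subrK.
set U := (a ^+ p - 1) * h.
have hUE : vle A U E by rewrite -[E]mulr1; apply: (vle_mul hA).
have hUw : vlt A U w := vle_lt_trans hA hUE hlt.
have hD : a ^+ p * h - 1 = U + w by rewrite /U /w mulrBl mul1r addrA subrK.
have [_ hwD] := vle_div_inv zp0 w0 (hbest h hkh).
apply: hlt; apply: (vle_trans hA) hwD _.
rewrite hD; apply: (vle_trans hA) (vlt_add hA hUw) hUE.
Qed.

Unset Implicit Arguments. Set Strict Implicit.

Theorem corollary6p7 (K : fieldType) (L : fieldExtType K) (A : {pred K})
    (B : {pred L}) (p : nat) (zeta h : K) :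
  [pchar K] =i pred0 ->
  is_valuation_ring A -> henselian A ->
  prime p -> in_max A (p%:R) ->
  p.-primitive_root zeta ->
  \dim {:L} = p -> (exists g, kummer_gen L p g) ->
  is_valuation_ring B -> (forall x : K, (x%:A \in B) = (x \in A)) ->
  defectless A B p ->
  best L A p zeta h ->
  forall x : K, in_Iprime L A p zeta h x -> in_I A p zeta h x.
Proof.
move=> _ hA hH hp _ hz hdim _ _ _ _ [hkh hbh] x [n [c [a [hc ha hbest ->]]]].
rewrite /in_I.
have hb := hensel_bound hA hH hp hz hdim hkh.
set z := zeta - 1.
set W := (z ^+ p / (h - 1)) ^+ p.-1.
have p0 : (0 < p)%N := prime_gt0 hp.
have z0 : z != 0 := z_neq0 hp hz.
have zp0 : z ^+ p != 0 by rewrite expf_neq0.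
have w0 : h - 1 != 0.
  by apply/eqP => e0; move: hb; rewrite e0 => /vle0r /eqP; rewrite (negPf zp0).
have [hzp1 _] := vle_zp hA hp hz.
have hgen : forall i, vle A W ((p%:R * (a i - 1) / (h - 1)) ^+ p).
  move=> i.
  have hw := gen_case hA hp hz hb hkh (ha i) (hbest i).
  have wp0 : (h - 1) ^+ p != 0 by rewrite expf_neq0.
  apply: (vle_mul2r wp0).
  have -> : W * (h - 1) ^+ p = (z ^+ p.-1) ^+ p * (h - 1).
    rewrite /W expr_div_n (exp_split (h - 1) p0) -!exprM mulnC; field.
    by rewrite expf_neq0.
  have -> : (p%:R * (a i - 1) / (h - 1)) ^+ p * (h - 1) ^+ p = p%:R ^+ p * (a i - 1) ^+ p.
    by rewrite expr_div_n divfK // exprMn.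
  by apply: (vle_mul hA) => //; apply: (vle_exp hA).
apply: (big_ind (fun y => vle A W (y ^+ p))).
- by rewrite expr0n gtn_eqF //; left.
- move=> u v hu hv; case: (vle_total hA u v) => huv.
    apply: (vle_trans hA) hu _; apply: (vle_exp hA).
    by apply: (vle_add hA) => //; apply: (vle_refl hA).
  apply: (vle_trans hA) hv _; apply: (vle_exp hA).
  by apply: (vle_add hA) => //; apply: (vle_refl hA).
- move=> i _; apply: (vle_trans hA) (hgen i) _.
  rewrite [X in vle _ _ X]exprMn [X in vle _ _ X]mulrC; apply: vle_mulA; exact: AX.
Qed.
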